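(* Let $D_n$ be the dumbbell graph on $2n$ nodes: the disjoint union of two complete graphs on $n$ nodes each (on $\{1,\dots,n\}$ and $\{n+1,\dots,2n\}$), together with the single additional edge $\{n,2n\}$. For every fixed $\epsilon\in(0,1)$, $t_{\epsilon,1}(D_n)=\Theta_\epsilon(n^3)$, i.e. there are constants $0<c_\epsilon\le C_\epsilon$ depending only on $\epsilon$ with $c_\epsilon n^3\le t_{\epsilon,1}(D_n)\le C_\epsilon n^3$.
   Context: The averaging process on a finite, undirected, connected graph $G=(V,E)$: the state vector $v(t)\in\mathbb R^{V}$, $t=0,1,2,\dots$, starts from a given $v(0)$; at each step $t\ge 1$ an edge $\{i,j\}\in E$ is chosen uniformly at random (independently of all previous choices) and both $v_i$ and $v_j$ are replaced by $(v_i+v_j)/2$, all other coordinates unchanged. $\bar v$ is the constant vector whose entries equal the mean of the entries of $v(0)$. $t_{\epsilon,1}(G)$ is the least $t\in\mathbb N$ such that for every $v(0)$ with $\|v(0)\|_1=1$ one has $\mathbb E\|v(t)-\bar v\|_1\le\epsilon$. *)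

(* Defs.v *)
From HB Require Import structures.
From mathcomp Require Import all_boot all_order all_algebra.
From mathcomp Require Import reals.
Set Implicit Arguments. Unset Strict Implicit. Unset Printing Implicit Defensive.
Import Order.TTheory GRing.Theory Num.Theory.
Local Open Scope ring_scope.

Section Averaging.
Variables (R : realType) (N : nat) (adj : rel 'I_N).

(* Edges of the (undirected, simple) graph given by the symmetric relation adj,
   each unordered edge {i,j} represented once as the pair (i,j) with i < j. *)
Definition edges : {set 'I_N * 'I_N} :=
  [set p : 'I_N * 'I_N | (val p.1 < val p.2)%N && adj p.1 p.2].

Definition avg_step (p : 'I_N * 'I_N) (v : 'I_N -> R) : 'I_N -> R :=
  fun k => if (k == p.1) || (k == p.2) then (v p.1 + v p.2) / 2 else v k.

(* Expectation of f (v(t)) when v(0) = v and at each step an edge is chosen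
   uniformly at random, independently (first step chosen, then recurse). *)
Fixpoint exp_after (t : nat) (f : ('I_N -> R) -> R) (v : 'I_N -> R) : R :=
  match t with
  | 0 => f v
  | t'.+1 => (#|edges|%:R)^-1 * \sum_(p in edges) exp_after t' f (avg_step p v)
  end.

Definition l1norm (v : 'I_N -> R) : R := \sum_k `|v k|.

Definition mean (v : 'I_N -> R) : R := (\sum_k v k) / N%:R.

Definition exp_l1_dist (t : nat) (v0 : 'I_N -> R) : R :=
  exp_after t (fun w => l1norm (fun k => w k - mean v0)) v0.

Definition eps_mixed (eps : R) (t : nat) : Prop :=
  forall v0 : 'I_N -> R, l1norm v0 = 1 -> exp_l1_dist t v0 <= eps.

Definition is_t_eps_1 (eps : R) (t : nat) : Prop :=
  eps_mixed eps t /\ forall s, eps_mixed eps s -> (t <= s)%N.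

End Averaging.

(* Dumbbell graph D_n on 2n nodes, 0-indexed: cliques on {0..n-1} and
   {n..2n-1}, plus the bridge edge {n-1, 2n-1}. *)
Definition dumbbell_adj (n : nat) : rel 'I_(n + n) :=
  fun i j => (i != j) &&
    [|| ((i < n)%N == (j < n)%N),
        (val i == n.-1) && (val j == (n + n).-1)
      | (val j == n.-1) && (val i == (n + n).-1)].
Arguments dumbbell_adj : clear implicits.

(* Main.v *)
Require Import Defs.
From HB Require Import structures.
From mathcomp Require Import all_boot all_order all_algebra.
From mathcomp Require Import reals.
From mathcomp Require Import ring lra.
From Stdlib Require Import Classical.
Import Order.TTheory GRing.Theory Num.Theory.
Local Open Scope ring_scope.
Set Implicit Arguments. Unset Strict Implicit. Unset Printing Implicit Defensive.

Section Gen.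
Variables (R : realType) (N : nat) (adj : rel 'I_N).
Local Notation E := (edges adj).
Local Notation m := (#|edges adj|%:R : R).
Local Notation step := (@avg_step R N).
Local Notation EA := (@exp_after R N adj).

Lemma avg_affine (hm : (0 < #|E|)%N) (X : 'I_N * 'I_N -> R) a b :
  m^-1 * \sum_(p in E) (a * X p + b) = a * (m^-1 * \sum_(p in E) X p) + b.
Proof.
rewrite big_split /= -mulr_sumr sumr_const -mulr_natr.
have hm' : m != 0 by rewrite pnatr_eq0 -lt0n.
by field.
Qed.

Lemma EA_affine (hm : (0 < #|E|)%N) t f a b v :
  EA t (fun w => a * f w + b) v = a * EA t f v + b.
Proof.
elim: t v => [|t IH] v //=.
under eq_bigr do rewrite IH.
by rewrite avg_affine.
Qed.

Lemma EA_mono (I : ('I_N -> R) -> Prop) f g :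
  (forall p w, p \in E -> I w -> I (step p w)) ->
  (forall w, I w -> f w <= g w) -> forall t w, I w -> EA t f w <= EA t g w.
Proof.
move=> HI Hfg; elim=> [|t IH] w Iw /=; first exact: Hfg.
apply: ler_wpM2l; first by rewrite invr_ge0 ler0n.
by apply: ler_sum => p pE; apply: IH; apply: HI.
Qed.

Lemma EA_comp t1 t2 f v : EA (t1 + t2) f v = EA t1 (EA t2 f) v.
Proof.
elim: t1 v => [|t IH] v //=.
by congr (_ * _); apply: eq_bigr => p _; rewrite IH.
Qed.

Lemma EA_drift (hm : (0 < #|E|)%N) (I : ('I_N -> R) -> Prop) f rho M :
  0 <= rho ->
  (forall p w, p \in E -> I w -> I (step p w)) ->
  (forall w, I w -> m^-1 * \sum_(p in E) f (step p w) <= rho * f w + (1 - rho) * M) ->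
  forall t w, I w -> EA t f w <= rho ^+ t * (f w - M) + M.
Proof.
move=> rho0 HI Hd; elim=> [|t IH] w Iw /=; first by rewrite expr0 mul1r subrK.
apply: (@le_trans _ _ (m^-1 * \sum_(p in E) (rho ^+ t * f (step p w) + (- (rho ^+ t * M) + M)))).
  apply: ler_wpM2l; first by rewrite invr_ge0 ler0n.
  apply: ler_sum => p pE.
  have := IH _ (HI _ _ pE Iw).
  by rewrite mulrBr addrA.
rewrite avg_affine //.
have hr : 0 <= rho ^+ t by apply: exprn_ge0.
have := ler_wpM2l hr (Hd w Iw).
rewrite exprSr; nra.
Qed.

End Gen.

Lemma pow_bound (R : realType) (x : R) k :
  0 <= x <= 1 -> (1 - x) ^+ k * (1 + k%:R * x) <= 1.
Proof.
move=> /andP[x0 x1]; elim: k => [|k IH]; first by rewrite expr0 mul0r addr0 mulr1.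
have h0 : 0 <= (1 - x) ^+ k by apply: exprn_ge0; lra.
rewrite exprSr -mulrA.
apply: le_trans IH; apply: ler_wpM2l => //.
rewrite -natr1. have hk : 0 <= (k%:R : R) by apply: ler0n. nra.
Qed.

Lemma least_exists (P : nat -> Prop) k : P k -> exists t, P t /\ forall s, P s -> (t <= s)%N.
Proof.
elim: k {-2}k (leqnn k) => [|k IH] j hj Pj.
  by exists j; split => // s _; move: hj; rewrite leqn0 => /eqP->.
case: (classic (exists s, (s < j)%N /\ P s)) => [[s [hs Ps]]|hno].
  apply: (IH s) => //; rewrite -ltnS; exact: leq_trans hs hj.
exists j; split => // s Ps; rewrite leqNgt; apply/negP => hs; apply: hno; by exists s.
Qed.

Lemma lagr (R : realType) n (a : 'I_n -> R) :
  \sum_i \sum_j (a i - a j)^+2 = 2 * (n%:R * \sum_i a i ^+ 2 - (\sum_i a i)^+2).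
Proof.
have inner i : \sum_j (a i - a j)^+2 = n%:R * a i ^+ 2 + \sum_j a j ^+ 2 - 2 * a i * \sum_j a j.
  rewrite (eq_bigr (fun j => a i ^+ 2 + (a j ^+ 2 - 2 * a i * a j))) => [|j _]; last by ring.
  rewrite big_split /= sumrB sumr_const card_ord -mulr_sumr -mulr_natl; ring.
rewrite (eq_bigr _ (fun i _ => inner i)).
rewrite sumrB big_split /= sumr_const card_ord -mulr_sumr -mulr_natl -mulr_suml -mulr_sumr.
ring.
Qed.

Lemma sum_if_eq (R : realType) (T : finType) (a : T) (X : T -> R) :
  \sum_i (if i == a then X i else 0) = X a.
Proof. by rewrite -big_mkcond big_pred1_eq. Qed.

Lemma sum2_if_eq (R : realType) (T : finType) (a b : T) (X : T -> T -> R) :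
  \sum_i \sum_j (if (i == a) && (j == b) then X i j else 0) = X a b.
Proof.
rewrite (bigD1 a) //= [X in _ + X]big1.
  by rewrite addr0 (eq_bigr (fun j => if j == b then X a j else 0)) ?sum_if_eq // => j _; rewrite eqxx.
by move=> i /negbTE -> /=; rewrite big1.
Qed.

Lemma one_le_sum (R : realType) (T : finType) (F : T -> R) a :
  (forall i, 0 <= F i) -> F a <= \sum_i F i.
Proof.
move=> h; rewrite (bigD1 a) //= lerDl; apply: sumr_ge0 => i _; exact: h.
Qed.

Lemma step_sum (R : realType) N (p : 'I_N * 'I_N) (w : 'I_N -> R) (G : 'I_N -> R -> R) :
  p.1 != p.2 ->
  \sum_k G k (avg_step p w k) = \sum_k G k (w k) - G p.1 (w p.1) - G p.2 (w p.2)
      + G p.1 ((w p.1 + w p.2) / 2) + G p.2 ((w p.1 + w p.2) / 2).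
Proof.
move=> ne.
rewrite (bigD1 p.1) //= (bigD1 p.2) //=; last by rewrite eq_sym.
rewrite [in RHS](bigD1 p.1) //= [in RHS](bigD1 p.2) //=; last by rewrite eq_sym.
have -> : \sum_(i | (i != p.1) && (i != p.2)) G i (avg_step p w i) =
          \sum_(i | (i != p.1) && (i != p.2)) G i (w i).
  apply: eq_bigr => i /andP[h1 h2]; rewrite /avg_step (negbTE h1) (negbTE h2) //.
rewrite /avg_step eqxx /= eqxx orbT; ring.
Qed.

Section Dumb.
Variables (R : realType) (k : nat).
Local Notation n := k.+1.
Local Notation T := 'I_(n + n).
Local Notation adj := (dumbbell_adj n).
Local Notation E := (edges adj).

Definition side (i : T) : bool := (i < n)%N.
Definition p0 : T := lshift n ord_max.
Definition q0 : T := rshift n ord_max.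

Lemma side_l (i : 'I_n) : side (lshift n i) = true.
Proof. by rewrite /side /= ltn_ord. Qed.
Lemma side_r (i : 'I_n) : side (rshift n i) = false.
Proof. by rewrite /side /= ltnNge leq_addr. Qed.
Lemma side_p0 : side p0 = true. Proof. exact: side_l. Qed.
Lemma side_q0 : side q0 = false. Proof. exact: side_r. Qed.
Lemma p0q0 : p0 != q0.
Proof. by apply/eqP => h; have := side_p0; rewrite h side_q0. Qed.

Lemma adjE i j : adj i j = (i != j) &&
  [|| side i == side j, (i == p0) && (j == q0) | (i == q0) && (j == p0)].
Proof.
have e1 x : (val x == n.-1) = (x == p0) by rewrite -val_eqE.
have h : (n + n).-1 = (n + k)%N by rewrite addnS.
have e2 x : (val x == (n + n).-1) = (x == q0) by rewrite h -val_eqE.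
by rewrite /dumbbell_adj !e1 !e2 [(j == p0) && _]andbC.
Qed.

Lemma adj_sym i j : adj i j = adj j i.
Proof.
rewrite !adjE eq_sym [side j == _]eq_sym; congr (_ && _).
by case: (i == p0); case: (i == q0); case: (j == p0); case: (j == q0); rewrite /= ?orbF ?orbT.
Qed.

Lemma adj_irr i : adj i i = false.
Proof. by rewrite adjE eqxx. Qed.

Lemma edge_cases p : p \in E -> (p.1 != p.2) /\ (side p.1 == side p.2 \/ p = (p0, q0)).
Proof.
case: p => i j; rewrite inE /= => /andP[lt]; rewrite adjE => /andP[ne].
case/or3P => [h|/andP[/eqP-> /eqP->]|/andP[/eqP e1 /eqP e2]]; [by split; [|left] | by split; [exact: p0q0|right]|].
by move: lt; rewrite e1 e2 /= ltnNge leq_addl.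
Qed.

Lemma bridge_in : (p0, q0) \in E.
Proof. by rewrite inE /= adjE p0q0 !eqxx /= orbT /= andbT addSn ltnS leq_addl. Qed.

Lemma E_pos : (0 < #|E|)%N.
Proof. by apply/card_gt0P; exists (p0, q0); exact: bridge_in. Qed.

Lemma sum_edges (F : T -> T -> R) : (forall i j, F i j = F j i) -> (forall i, F i i = 0) ->
  2 * \sum_(p in E) F p.1 p.2 =
  \sum_i \sum_j (if side i == side j then F i j else 0) + 2 * F p0 q0.
Proof.
move=> Fs F0.
pose G (i j : T) := if (i < j)%N && adj i j then F i j else 0.
have e1 : \sum_(p in E) F p.1 p.2 = \sum_i \sum_j G i j.
  rewrite pair_big /= big_mkcond /=; apply: eq_bigr => p _; by rewrite inE.
have e2 : \sum_i \sum_j (if adj i j then F i j else 0) = \sum_i \sum_j (G i j + G j i).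
  apply: eq_bigr => i _; apply: eq_bigr => j _.
  have hs : adj j i = adj i j by apply: adj_sym.
  rewrite /G hs (Fs j i).
  case: (ltngtP i j) => h /=; try by case: (adj i j); rewrite /= ?addr0 ?add0r.
  have hij : i = j by apply: val_inj.
  by rewrite hij adj_irr addr0.
have e3 : \sum_i \sum_j (G i j + G j i) = 2 * \sum_(p in E) F p.1 p.2.
  rewrite e1 (eq_bigr (fun i => \sum_j G i j + \sum_j G j i)) => [|i _]; last by rewrite big_split.
  rewrite big_split /= [X in _ + X = _]exchange_big /=; ring.
rewrite -e3 -e2.
have e4 i j : (if adj i j then F i j else 0) =
   (if side i == side j then F i j else 0) + (if (i == p0) && (j == q0) then F i j else 0)
   + (if (i == q0) && (j == p0) then F i j else 0).
  case: (eqVneq i j) => [->|nij].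
    by rewrite adj_irr F0 !if_same !addr0.
  rewrite adjE nij /=.
  have hqp : (q0 == p0) = false by rewrite eq_sym (negbTE p0q0).
  have [/andP[/eqP hi /eqP hj]|hb1] := boolP ((i == p0) && (j == q0)).
    by rewrite hi hj side_p0 side_q0 /= ?(negbTE p0q0) ?hqp ?eqxx /= ?add0r ?addr0.
  have [/andP[/eqP hi /eqP hj]|hb2] := boolP ((i == q0) && (j == p0)).
    by rewrite hi hj side_p0 side_q0 /= ?(negbTE p0q0) ?hqp ?eqxx /= ?add0r ?addr0.
  by rewrite ?(negbTE hb1) ?(negbTE hb2) /= ?orbF ?addr0.
rewrite (eq_bigr (fun i => \sum_j ((if side i == side j then F i j else 0) +
   (if (i == p0) && (j == q0) then F i j else 0) + (if (i == q0) && (j == p0) then F i j else 0)))); last first.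
  by move=> i _; apply: eq_bigr => j _; rewrite e4.
rewrite (eq_bigr (fun i => \sum_j (if side i == side j then F i j else 0) +
   \sum_j (if (i == p0) && (j == q0) then F i j else 0) + \sum_j (if (i == q0) && (j == p0) then F i j else 0))); last first.
  by move=> i _; rewrite !big_split.
rewrite !big_split /= !sum2_if_eq (Fs q0 p0); ring.
Qed.


Lemma sum_split (F : T -> R) :
  \sum_i F i = \sum_(i < n) F (lshift n i) + \sum_(i < n) F (rshift n i).
Proof. by rewrite big_split_ord. Qed.

Lemma sideF_sum (F : T -> T -> R) :
  \sum_i \sum_j (if side i == side j then F i j else 0) =
  \sum_(i < n) \sum_(j < n) F (lshift n i) (lshift n j) +
  \sum_(i < n) \sum_(j < n) F (rshift n i) (rshift n j).
Proof.
rewrite sum_split; congr (_ + _); apply: eq_bigr => i _; rewrite sum_split.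
  rewrite [X in _ + X]big1 ?addr0 => [|j _]; last by rewrite side_l side_r.
  by apply: eq_bigr => j _; rewrite !side_l.
rewrite [X in X + _]big1 ?add0r => [|j _]; last by rewrite side_l side_r.
by apply: eq_bigr => j _; rewrite !side_r.
Qed.

Definition SL (y : T -> R) := \sum_(i < n) y (lshift n i).
Definition SR (y : T -> R) := \sum_(i < n) y (rshift n i).
Definition QL (y : T -> R) := \sum_(i < n) y (lshift n i) ^+ 2.
Definition QR (y : T -> R) := \sum_(i < n) y (rshift n i) ^+ 2.

Lemma edge_sq (y : T -> R) :
  \sum_(p in E) (y p.1 - y p.2) ^+ 2 =
  n%:R * (QL y + QR y) - SL y ^+ 2 - SR y ^+ 2 + (y p0 - y q0) ^+ 2.
Proof.
have := @sum_edges (fun i j => (y i - y j) ^+ 2).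
rewrite sideF_sum !lagr /QL /SL /QR /SR.
move=> h; have {}h := h (fun i j => ltac:(ring)) (fun i => ltac:(by rewrite subrr expr0n)).
lra.
Qed.

Lemma m_eq : (#|E|%:R : R) = n%:R * k%:R + 1.
Proof.
have := @sum_edges (fun i j => if i == j then 0 else 1).
rewrite sideF_sum (negbTE p0q0).
have hE : \sum_(p in E) (if p.1 == p.2 then 0 else 1 : R) = #|E|%:R.
  rewrite -sum1_card natr_sum; apply: eq_bigr => p /edge_cases [/negbTE -> _] //.
have hL (F : 'I_n -> T) : injective F ->
    \sum_(i < n) \sum_(j < n) (if F i == F j then 0 else 1 : R) = n%:R * k%:R.
  move=> Finj.
  have hi i : \sum_(j < n) (if F i == F j then 0 else 1 : R) = k%:R.
    rewrite (eq_bigr (fun j => 1 - (if j == i then 1 else 0))) => [|j _]; last first.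
      by rewrite (inj_eq Finj) eq_sym; case: (j == i); rewrite ?subrr ?subr0.
    by rewrite sumrB sumr_const card_ord sum_if_eq -natr1 addrK.
  rewrite (eq_bigr _ (fun i _ => hi i)) sumr_const card_ord mulr_natl //.
rewrite hE !hL; [|exact: rshift_inj|exact: lshift_inj].
move=> h; have {}h := h (fun i j => ltac:(by rewrite eq_sym)) (fun i => ltac:(by rewrite eqxx)).
lra.
Qed.

Definition Dl (w : T -> R) := \sum_k (if side k then w k else - w k).

Lemma step_sumw p (w : T -> R) : p \in E -> \sum_k avg_step p w k = \sum_k w k.
Proof.
case/edge_cases => ne _.
by rewrite (@step_sum R _ p w (fun _ x => x)) //=; lra.
Qed.

Lemma step_phi (c : R) p (w : T -> R) : p \in E ->
  \sum_k (avg_step p w k - c) ^+ 2 = \sum_k (w k - c) ^+ 2 - (w p.1 - w p.2) ^+ 2 / 2.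
Proof.
case/edge_cases => ne _.
rewrite (@step_sum R _ p w (fun _ x => (x - c) ^+ 2)) //=; by field.
Qed.

Lemma step_l1 (c : R) p (w : T -> R) : p \in E ->
  \sum_k `|avg_step p w k - c| <= \sum_k `|w k - c|.
Proof.
case/edge_cases => ne _.
rewrite (@step_sum R _ p w (fun _ x => `|x - c|)) //=.
have : `|(w p.1 + w p.2) / 2 - c| <= (`|w p.1 - c| + `|w p.2 - c|) / 2.
  have -> : (w p.1 + w p.2) / 2 - c = ((w p.1 - c) + (w p.2 - c)) / 2 by field.
  rewrite normrM normfV normr_nat ler_pM2r ?invr_gt0 ?ltr0n //.
  exact: ler_normD.
lra.
Qed.

Lemma step_D p (w : T -> R) : p \in E ->
  Dl (avg_step p w) = Dl w - (if p == (p0, q0) then w p0 - w q0 else 0).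
Proof.
case/edge_cases => ne [hs|hb].
  have hpb : p != (p0, q0).
    by apply/eqP => hb; move: hs; rewrite hb /= side_p0 side_q0.
  rewrite (negbTE hpb) subr0 /Dl (@step_sum R _ p w (fun k x => if side k then x else - x)) //=.
  move/eqP: hs => ->; case: (side p.2); lra.
rewrite hb eqxx /Dl (@step_sum R _ (p0, q0) w (fun k x => if side k then x else - x)) /=;
  last exact: p0q0.
rewrite side_p0 side_q0; lra.
Qed.

End Dumb.

Lemma key_ineq (R : realType) (nn a u v g WL WR : R) : 1 <= nn -> u ^+ 2 <= WL -> v ^+ 2 <= WR ->
  2 * a = g - u + v ->
  WL + WR + 2 * nn * a ^+ 2 <= 3 * nn * (nn * (WL + WR) + g ^+ 2).
Proof.
move=> h1 hu hv ha.
have h4 : 4 * a ^+ 2 <= 3 * (g ^+ 2 + u ^+ 2 + v ^+ 2).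
  have e : 4 * a ^+ 2 = (g - u + v) ^+ 2 by rewrite -ha; ring.
  rewrite e -subr_ge0.
  have -> : 3 * (g ^+ 2 + u ^+ 2 + v ^+ 2) - (g - u + v) ^+ 2 = (g + u) ^+ 2 + (g - v) ^+ 2 + (u + v) ^+ 2 by ring.
  by rewrite !addr_ge0 ?sqr_ge0.
have hW : u ^+ 2 + v ^+ 2 <= WL + WR by lra.
have hu0 : 0 <= u ^+ 2 by nra.
have hv0 : 0 <= v ^+ 2 by nra.
have hg0 : 0 <= g ^+ 2 by nra.
have h5 : 4 * a ^+ 2 <= 3 * (g ^+ 2 + (WL + WR)) by lra.
have h6 : nn * (4 * a ^+ 2) <= nn * (3 * (g ^+ 2 + (WL + WR))) by apply: ler_wpM2l; lra.
have h7 : (1 + 3/2 * nn) * (WL + WR) <= 3 * nn * nn * (WL + WR).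
  apply: ler_wpM2r; nra.
have h8 : 0 <= nn * g ^+ 2 by nra.
nra.
Qed.

Lemma side_var (R : realType) n (a : 'I_n.+1 -> R) i :
  (a i - (\sum_j a j) / n.+1%:R) ^+ 2 <= \sum_j a j ^+ 2 - (\sum_j a j) ^+ 2 / n.+1%:R.
Proof.
set s := \sum_j a j; set mu := s / n.+1%:R.
have hn : (n.+1%:R : R) != 0 by rewrite pnatr_eq0.
have e : \sum_j (a j - mu) ^+ 2 = \sum_j a j ^+ 2 - s ^+ 2 / n.+1%:R.
  rewrite (eq_bigr (fun j => a j ^+ 2 - (2 * mu * a j - mu ^+ 2))) => [|j _]; last by ring.
  rewrite sumrB sumrB sumr_const card_ord -mulr_sumr -/s /mu -mulr_natr; field; by rewrite addrC natr1 pnatr_eq0.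
rewrite -e; apply: (@one_le_sum R _ (fun j => (a j - mu) ^+ 2) i) => j; exact: sqr_ge0.
Qed.

Section Upper.
Variables (R : realType) (k : nat).
Local Notation n := k.+1.
Local Notation T := 'I_(n + n).
Local Notation adj := (dumbbell_adj n).
Local Notation E := (edges adj).
Local Notation m := (#|edges adj|%:R : R).
Local Notation step := (@avg_step R (n + n)).

Definition Phi (c : R) (w : T -> R) := \sum_k (w k - c) ^+ 2.

Lemma m_gt0 : 0 < m.
Proof. by rewrite ltr0n E_pos. Qed.

Lemma drift_eq c (w : T -> R) :
  m^-1 * \sum_(p in E) Phi c (step p w) =
  Phi c w - (2 * m)^-1 * \sum_(p in E) (w p.1 - w p.2) ^+ 2.
Proof.
rewrite (eq_bigr (fun p => Phi c w - (w p.1 - w p.2) ^+ 2 / 2)); last first.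
  by move=> p hp; rewrite /Phi step_phi.
rewrite sumrB sumr_const -mulr_suml -mulr_natr.
have := m_gt0; rewrite lt0r => /andP[hm _].
by field.
Qed.

Lemma facts S0 c (w : T -> R) : c * (n + n)%:R = S0 -> \sum_k w k = S0 ->
  \sum_k `|w k - c| <= 2 ->
  let y := fun k => w k - c in
  (m^-1 * \sum_(p in E) Phi c (step p w) =
        Phi c w - (2 * m)^-1 * (n%:R * (QL y + QR y) - SL y ^+ 2 - SR y ^+ 2 + (y (p0 k) - y (q0 k)) ^+ 2)) /\
      (Phi c w = QL y + QR y) /\ (SR y = - SL y) /\ (SL y ^+ 2 <= 1) /\
      ((y (p0 k) - SL y / n%:R) ^+ 2 <= QL y - SL y ^+ 2 / n%:R) /\
      ((y (q0 k) - SR y / n%:R) ^+ 2 <= QR y - SR y ^+ 2 / n%:R).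
Proof.
move=> hc hs hl y.
have hsum : SL y + SR y = 0.
  have : \sum_k y k = 0.
    rewrite /y sumrB hs sumr_const card_ord -hc -mulr_natr; ring.
  by rewrite sum_split.
have habs : `|SL y| + `|SR y| <= 2.
  apply: le_trans hl; rewrite (sum_split (fun k => `|w k - c|)).
  by apply: lerD; apply: ler_norm_sum.
split; [|split; [|split; [|split; [|split]]]].
- rewrite drift_eq -(edge_sq y); congr (_ - _ * _); apply: eq_bigr => p _; rewrite /y; congr (_ ^+ 2); ring.
- by rewrite /Phi sum_split.
- lra.
- have hSR : SR y = - SL y by lra.
  move: habs; rewrite hSR normrN => h.
  have h1 : `|SL y| <= 1 by lra.
  rewrite -real_normK ?num_real //.
  have h0 : 0 <= `|SL y| by [].
  nra.
- exact: (side_var (fun i => y (lshift n i)) ord_max).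
- exact: (side_var (fun i => y (rshift n i)) ord_max).
Qed.


Lemma n_gt0 : (0 : R) < n%:R.
Proof. by rewrite ltr0n. Qed.

Lemma phase1 S0 c (w : T -> R) : c * (n + n)%:R = S0 -> \sum_k w k = S0 ->
  \sum_k `|w k - c| <= 2 ->
  m^-1 * \sum_(p in E) Phi c (step p w) <=
    (1 - n%:R / (2 * m)) * Phi c w + (1 - (1 - n%:R / (2 * m))) * (2 / n%:R).
Proof.
move=> hc hs hl; have [e1 [e2 [e3 [e4 _]]]] := facts hc hs hl.
rewrite e1 e2 e3.
set y := fun k => w k - c.
set A := QL y + QR y; set S := SL y; set g := y (p0 k) - y (q0 k).
have hm := m_gt0; have hn := n_gt0.
set z := (2 * m)^-1.
have hz : 0 < z by rewrite /z invr_gt0; lra.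
have eR : (1 - n%:R / (2 * m)) * A + (1 - (1 - n%:R / (2 * m))) * (2 / n%:R)
          = A - z * (n%:R * A) + z * 2.
  rewrite /z; field; apply/andP; split; lra.
rewrite eR -subr_ge0.
have -> : A - z * (n%:R * A) + z * 2 - (A - z * (n%:R * A - S ^+ 2 - (- S) ^+ 2 + g ^+ 2))
          = z * (2 - 2 * S ^+ 2 + g ^+ 2) by ring.
apply: mulr_ge0; first lra.
have e4b : S ^+ 2 <= 1 := e4. have := sqr_ge0 g; lra.
Qed.

Lemma phase2 S0 c (w : T -> R) : c * (n + n)%:R = S0 -> \sum_k w k = S0 ->
  \sum_k `|w k - c| <= 2 ->
  m^-1 * \sum_(p in E) Phi c (step p w) <=
    (1 - (6 * n%:R * m)^-1) * Phi c w + (1 - (1 - (6 * n%:R * m)^-1)) * 0.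
Proof.
move=> hc hs hl; have [e1 [e2 [e3 [e4 [e5 e6]]]]] := facts hc hs hl.
rewrite e1 e2; rewrite e3 in e6 *.
set y := fun k => w k - c.
set S := SL y; set g := y (p0 k) - y (q0 k).
have hm := m_gt0; have hn := n_gt0.
set a := S / n%:R.
have hSa : S = n%:R * a by rewrite /a; field; lra.
set WL := QL y - n%:R * a ^+ 2; set WR := QR y - n%:R * a ^+ 2.
have hL : (y (p0 k) - a) ^+ 2 <= WL.
  move: e5; rewrite -/a /WL; have -> : S ^+ 2 / n%:R = n%:R * a ^+ 2 by rewrite hSa; field; lra.
  by [].
have hR : (y (q0 k) + a) ^+ 2 <= WR.
  move: e6; rewrite /WR; have -> : (- S) ^+ 2 / n%:R = n%:R * a ^+ 2 by rewrite hSa; field; lra.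
  by have -> : y (q0 k) - - S / n%:R = y (q0 k) + a by rewrite /a; field; lra.
have hn1 : 1 <= (n%:R : R) by rewrite ler1n.
have key := key_ineq hn1 hL hR (_ : 2 * a = g - (y (p0 k) - a) + (y (q0 k) + a)).
have {key} key := key ltac:(rewrite /g; ring).
have eA : QL y + QR y = WL + WR + 2 * n%:R * a ^+ 2 by rewrite /WL /WR; ring.
rewrite eA hSa mulr0 addr0.
set z := (2 * m)^-1.
have hz : 0 < z by rewrite /z invr_gt0; lra.
have ez : (6 * n%:R * m)^-1 = z / (3 * n%:R) by rewrite /z; field; apply/andP; split; lra.
rewrite ez -subr_ge0.
have -> : (1 - z / (3 * n%:R)) * (WL + WR + 2 * n%:R * a ^+ 2) -
  (WL + WR + 2 * n%:R * a ^+ 2 -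
   z * (n%:R * (WL + WR + 2 * n%:R * a ^+ 2) - (n%:R * a) ^+ 2 - (- (n%:R * a)) ^+ 2 + g ^+ 2))
  = z / (3 * n%:R) * (3 * n%:R * (n%:R * (WL + WR) + g ^+ 2) - (WL + WR + 2 * n%:R * a ^+ 2)).
  by field; lra.
apply: mulr_ge0; last lra.
apply: divr_ge0; lra.
Qed.


Lemma Phi_le c (w : T -> R) : \sum_k `|w k - c| <= 2 -> Phi c w <= 4.
Proof.
move=> hl; rewrite /Phi.
apply: (@le_trans _ _ (\sum_k 2 * `|w k - c|)).
  apply: ler_sum => j _.
  have h := @one_le_sum R _ (fun j => `|w j - c|) j (fun i => normr_ge0 _).
  have h0 : 0 <= `|w j - c| by [].
  rewrite -real_normK ?num_real //; nra.
by rewrite -mulr_sumr; lra.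
Qed.

Lemma m_ge : (n%:R : R) <= 2 * m.
Proof.
rewrite m_eq; have h0 : (0 : R) <= k%:R by [].
rewrite -natr1; nra.
Qed.

Lemma l1_pt (eps : R) (y : R) : 0 < eps ->
  `|y| <= n%:R / eps * y ^+ 2 + eps / (4 * n%:R).
Proof.
move=> he; have hn := n_gt0.
rewrite -subr_ge0.
have -> : n%:R / eps * y ^+ 2 + eps / (4 * n%:R) - `|y| =
          (2 * n%:R * `|y| - eps) ^+ 2 / (4 * n%:R * eps).
  rewrite -[y ^+ 2]real_normK ?num_real //; field; apply/andP; split; lra.
apply: divr_ge0; first exact: sqr_ge0.
apply: mulr_ge0; lra.
Qed.

Lemma upper (eps : R) (K : nat) : 0 < eps -> 12 / eps ^+ 2 < K%:R ->
  eps_mixed adj eps (2 * #|E| + 6 * n * #|E| * K).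
Proof.
move=> he hK v0 hv0.
have hm := m_gt0; have hn := n_gt0.
have hnn : ((n + n)%:R : R) = 2 * n%:R by rewrite natrD; ring.
set c := mean v0; set S0 := \sum_k v0 k.
have hc : c * (n + n)%:R = S0 by rewrite /c /mean divfK // hnn; lra.
pose I (w : T -> R) := \sum_k w k = S0 /\ \sum_k `|w k - c| <= 2.
have HI : forall p w, p \in E -> I w -> I (step p w).
  move=> p w hp [h1 h2]; split; first by rewrite step_sumw.
  exact: le_trans (step_l1 c w hp) h2.
have I0 : I v0.
  split => //.
  apply: (@le_trans _ _ (\sum_k (`|v0 k| + `|c|))); first by apply: ler_sum => j _; apply: ler_normB.
  rewrite big_split /= sumr_const card_ord.
  have -> : \sum_k `|v0 k| = 1 by [].
  have : `|S0| <= 1 by rewrite -hv0; apply: ler_norm_sum.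
  rewrite -hc normrM (ger0_norm (ler0n _ _)) => h; rewrite -mulr_natr; lra.
set x1 := n%:R / (2 * m).
have hx1 : 0 <= x1 <= 1.
  have := m_ge; rewrite /x1 => hmg; apply/andP; split.
    by apply: divr_ge0; lra.
  by rewrite ler_pdivrMr; lra.
have P1 := EA_drift (@E_pos k) (I := I) (f := Phi c) (rho := 1 - x1) (M := 2 / n%:R)
   ltac:(lra) HI (fun w '(conj h1 h2) => phase1 hc h1 h2) (2 * #|E|) I0.
have pw1 := pow_bound (2 * #|E|) hx1.
have ex1 : (2 * #|E|)%:R * x1 = n%:R by rewrite /x1 natrM; field; lra.
rewrite ex1 in pw1.
set r1 : R := (1 - x1) ^+ (2 * #|E|) in P1 pw1.
have r10 : 0 <= r1 by apply: exprn_ge0; lra.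
clearbody r1.
have F0 := Phi_le (proj2 I0).
have hP1 : exp_after adj (2 * #|E|) (Phi c) v0 <= 6 / n%:R.
  apply: le_trans P1 _.
  move: pw1 hn; set nr := (n%:R : R); clearbody nr => pw1 hn.
  have hq : r1 <= nr^-1.
    rewrite -[nr^-1]mul1r ler_pdivlMr //; nra.
  have hq0 : 0 <= nr^-1 by rewrite invr_ge0; lra.
  move: hq hq0; set q := nr^-1; clearbody q => hq hq0.
  have h1 : r1 * Phi c v0 <= 4 * q.
    have hh : 0 <= r1 * (4 - Phi c v0) by apply: mulr_ge0 => //; lra.
    rewrite mulrBr in hh; apply: (@le_trans _ _ (r1 * 4)); first lra.
    by rewrite mulrC; apply: ler_wpM2l.
  have h2 : 0 <= r1 * q by apply: mulr_ge0.
  rewrite mulrBr; lra.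
set x2 := (6 * n%:R * m)^-1.
have hx2 : 0 <= x2 <= 1.
  have hn1 : 1 <= (n%:R : R) by rewrite ler1n.
  have hm1 : 1 <= m by rewrite ler1n E_pos.
  have h6 : 1 <= 6 * n%:R * m by nra.
  have h6' : 0 < 6 * n%:R * m by lra.
  rewrite /x2; apply/andP; split; first by rewrite invr_ge0; lra.
  by rewrite invr_le1 ?unitfE ?(gt_eqF h6').
have P2 : forall w, I w -> exp_after adj (6 * n * #|E| * K) (Phi c) w <=
      (1 - x2) ^+ (6 * n * #|E| * K) * (Phi c w - 0) + 0.
  move=> w Iw.
  exact: (EA_drift (@E_pos k) (I := I) (f := Phi c) (rho := 1 - x2) (M := 0)
   ltac:(lra) HI (fun w '(conj h1 h2) => phase2 hc h1 h2) _ Iw).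
have pw2 := pow_bound (6 * n * #|E| * K) hx2.
have ex2 : (6 * n * #|E| * K)%:R * x2 = K%:R by rewrite /x2 !natrM; field; apply/andP; split; lra.
rewrite ex2 in pw2.
set r2 : R := (1 - x2) ^+ (6 * n * #|E| * K) in P2 pw2.
have r20 : 0 <= r2 by apply: exprn_ge0; lra.
clearbody r2.
have hP : exp_after adj (2 * #|E| + 6 * n * #|E| * K) (Phi c) v0 <= r2 * (6 / n%:R).
  rewrite EA_comp.
  apply: (@le_trans _ _ (exp_after adj (2 * #|E|) (fun w => r2 * Phi c w + 0) v0)).
    apply: (EA_mono HI) => // w Iw; have := P2 w Iw; rewrite !subr0 !addr0 //.
  rewrite EA_affine ?E_pos // addr0; apply: ler_wpM2l => //.
have hK0 : 0 < (K%:R : R).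
  apply: le_lt_trans hK; apply: divr_ge0; [lra | exact: sqr_ge0].
have hr2 : r2 * 12 / eps ^+ 2 <= 1.
  have : r2 * K%:R <= 1 by nra.
  move=> h; apply: le_trans h; rewrite -mulrA; apply: ler_wpM2l => //; exact: ltW.
have he2 : 0 < eps ^+ 2 by apply: exprn_gt0.
have hr2' : r2 * 12 <= eps ^+ 2.
  by move: hr2; rewrite ler_pdivrMr // mul1r.
rewrite /exp_l1_dist.
apply: (@le_trans _ _ (exp_after adj (2 * #|E| + 6 * n * #|E| * K)
   (fun w => n%:R / eps * Phi c w + eps / 2) v0)).
  apply: (@EA_mono _ _ _ (fun _ => True)) => // w _.
  rewrite /l1norm /Phi mulr_sumr.
  apply: (@le_trans _ _ (\sum_k (n%:R / eps * (w k - c) ^+ 2 + eps / (4 * n%:R)))).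
    by apply: ler_sum => j _; apply: l1_pt.
  rewrite big_split /= sumr_const card_ord.
  have e := mulr_natr (eps / (4 * n%:R)) (n + n).
  rewrite -e hnn.
  have -> : eps / (4 * n%:R) * (2 * n%:R) = eps / 2 by field; lra.
  by [].
rewrite EA_affine ?E_pos //.
have : n%:R / eps * exp_after adj (2 * #|E| + 6 * n * #|E| * K) (Phi c) v0 <=
       n%:R / eps * (r2 * (6 / n%:R)).
  by apply: ler_wpM2l => //; apply: divr_ge0; lra.
have -> : n%:R / eps * (r2 * (6 / n%:R)) = (r2 * 12) / eps / 2 by field; lra.
have : (r2 * 12) / eps <= eps.
  by rewrite ler_pdivrMr // -expr2.
lra.
Qed.

End Upper.

Section Lower.
Variables (R : realType) (k : nat).
Local Notation n := k.+1.
Local Notation T := 'I_(n + n).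
Local Notation adj := (dumbbell_adj n).
Local Notation E := (edges adj).
Local Notation m := (#|edges adj|%:R : R).
Local Notation step := (@avg_step R (n + n)).

Lemma step_bound (w : T -> R) p b : (forall j, `|w j| <= b) -> forall j, `|step p w j| <= b.
Proof.
move=> hb j; rewrite /avg_step; case: ifP => _; last exact: hb.
have h1 := hb p.1; have h2 := hb p.2.
rewrite normrM normfV normr_nat.
have := ler_normD (w p.1) (w p.2).
move: (`|w p.1 + w p.2|) => x hx.
rewrite ler_pdivrMr ?ltr0n //; lra.
Qed.

Lemma lowerEA (beta : R) : 0 <= beta -> forall t (w : T -> R), (forall j, `|w j| <= beta / 2) ->
  `|Dl w| - t%:R * (beta / m) <= exp_after adj t (fun w => `|Dl w|) w.
Proof.
move=> hb0; elim=> [|t IH] w hw; first by rewrite /= mul0r subr0.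
have hm := m_gt0 R k.
pose h (p : T * T) := if p == (p0 k, q0 k) then beta else 0.
have step1 : forall p, p \in E -> `|Dl w| - h p <= `|Dl (step p w)|.
  move=> p hp; rewrite step_D // /h.
  case: (p == (p0 k, q0 k)); last by rewrite subr0 subr0.
  have hg : `|w (p0 k) - w (q0 k)| <= beta.
    have := ler_normB (w (p0 k)) (w (q0 k)); have := hw (p0 k); have := hw (q0 k); lra.
  have := ler_normD (Dl w - (w (p0 k) - w (q0 k))) (w (p0 k) - w (q0 k)).
  rewrite subrK; lra.
have hsum : \sum_(p in E) h p = beta.
  rewrite (bigD1 (p0 k, q0 k)) ?bridge_in //= /h eqxx big1 ?addr0 // => p /andP[_ /negbTE ->] //.
rewrite /=.
apply: (@le_trans _ _ (m^-1 * \sum_(p in E) ((`|Dl w| - t%:R * (beta / m)) - h p))).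
  rewrite sumrB sumr_const hsum -mulr_natr -natr1.
  rewrite le_eqVlt; apply/orP; left; apply/eqP.
  by field; rewrite gt_eqF.
apply: ler_wpM2l; first by rewrite invr_ge0; lra.
apply: ler_sum => p hp.
apply: le_trans (IH _ (step_bound p hw)).
have := step1 p hp; lra.
Qed.

Lemma lower (eps : R) t : eps_mixed adj eps t -> (1 - eps) * (n%:R * m) <= t%:R.
Proof.
move=> hmix.
have hm := m_gt0 R k; have hn := n_gt0 R k.
set a : R := (2 * n%:R)^-1.
have ha : 0 < a by rewrite /a invr_gt0; lra.
pose v0 : T -> R := fun j => if side j then a else - a.
have hnn : ((n + n)%:R : R) = 2 * n%:R by rewrite natrD; ring.
have hv : l1norm v0 = 1.
  rewrite /l1norm (eq_bigr (fun _ => a)) => [|j _]; last first.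
    by rewrite /v0; case: (side j); rewrite ?normrN gtr0_norm.
  rewrite sumr_const card_ord.
  have e := mulr_natr a (n + n); rewrite -e hnn /a; field; lra.
have hmean : mean v0 = 0.
  rewrite /mean sum_split.
  have e1 : \sum_(i < n) v0 (lshift n i) = \sum_(i < n) a by apply: eq_bigr => i _; rewrite /v0 side_l.
  have e2 : \sum_(i < n) v0 (rshift n i) = \sum_(i < n) - a by apply: eq_bigr => i _; rewrite /v0 side_r.
  by rewrite e1 e2 sumrN subrr mul0r.
have hD : Dl v0 = 1.
  rewrite -hv /Dl /l1norm; apply: eq_bigr => j _; rewrite /v0.
  by case: (side j); rewrite ?opprK ?normrN gtr0_norm.
have := hmix v0 hv; rewrite /exp_l1_dist hmean.
have hb : forall j, `|v0 j| <= n%:R^-1 / 2.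
  move=> j; have -> : n%:R^-1 / 2 = a by rewrite /a; field; lra.
  by rewrite /v0; case: (side j); rewrite ?normrN gtr0_norm.
have L := @lowerEA (n%:R^-1) ltac:(by rewrite invr_ge0; lra) t v0 hb.
have M : exp_after adj t (fun w => `|Dl w|) v0 <=
         exp_after adj t (fun w => l1norm (fun k0 => w k0 - 0)) v0.
  apply: (@EA_mono _ _ _ (fun _ => True)) => // w _.
  rewrite /Dl /l1norm; apply: le_trans (ler_norm_sum _ _ _) _.
  by apply: ler_sum => j _; case: (side j); rewrite ?normrN subr0.
rewrite hD normr1 in L.
move=> hE.
have h : 1 - t%:R * (n%:R^-1 / m) <= eps by exact: le_trans L (le_trans M hE).
have hnm : 0 <= n%:R * m by apply: mulr_ge0; lra.
have h' := ler_wpM2r hnm h.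
have e : (1 - t%:R * (n%:R^-1 / m)) * (n%:R * m) = n%:R * m - t%:R.
  by field; apply/andP; split; lra.
rewrite e in h'; lra.
Qed.

End Lower.

Unset Implicit Arguments. Set Strict Implicit. Set Printing Implicit Defensive.

Theorem theorem6 (R : realType) (eps : R) :
  0 < eps < 1 ->
  exists c C : R, [/\ 0 < c, c <= C &
    forall n : nat, (1 <= n)%N ->
      exists t : nat, is_t_eps_1 (dumbbell_adj n) eps t /\
        c * n%:R ^+ 3 <= t%:R <= C * n%:R ^+ 3].
Proof.
move=> /andP[he0 he1].
have he2 : 0 < eps ^+ 2 by apply: exprn_gt0.
set K := Num.Def.archi_bound (12 / eps ^+ 2).
have hK : 12 / eps ^+ 2 < K%:R.
  by apply: archi_boundP; apply: divr_ge0; lra.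
have hK0 : (0 : R) <= K%:R by [].
exists ((1 - eps) / 2), (2 + 6 * K%:R); split; [lra | lra |].
case=> [//|k] _.
have hup := @upper R k eps K he0 hK.
have [t [ht hmin]] := least_exists hup.
exists t; split; first by split.
have hlow := lower ht.
have hle := hmin _ hup.
have hm := m_eq R k.
move: hlow; rewrite hm => hlow.
have hT : (t%:R : R) <= (2 * #|edges (dumbbell_adj k.+1)| + 6 * k.+1 * #|edges (dumbbell_adj k.+1)| * K)%:R.
  by rewrite ler_nat.
rewrite natrD !natrM hm in hT.
rewrite -natr1 in hlow hT *.
set kr := (k%:R : R) in hlow hT *.
have hk0 : 0 <= kr by rewrite /kr.
clearbody kr.
apply/andP; split.
  apply: le_trans hlow.
  have h1 : (kr + 1) ^+ 3 <= 2 * ((kr + 1) * ((kr + 1) * kr + 1)).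
    rewrite -subr_ge0.
    have -> : 2 * ((kr + 1) * ((kr + 1) * kr + 1)) - (kr + 1) ^+ 3 = (kr + 1) * (kr ^+ 2 + 1) by ring.
    apply: mulr_ge0; first lra.
    have := sqr_ge0 kr; lra.
  have -> : (1 - eps) / 2 * (kr + 1) ^+ 3 = (1 - eps) * ((kr + 1) ^+ 3 / 2) by ring.
  apply: ler_wpM2l; lra.
apply: (le_trans hT).
set X := (kr + 1) * kr + 1.
have h1 : X <= (kr + 1) ^+ 2 by rewrite /X; rewrite -subr_ge0;
  have -> : (kr + 1) ^+ 2 - ((kr + 1) * kr + 1) = kr by ring.
have h2 : (kr + 1) ^+ 2 <= (kr + 1) ^+ 3.
  rewrite -subr_ge0.
  have -> : (kr + 1) ^+ 3 - (kr + 1) ^+ 2 = (kr + 1) ^+ 2 * kr by ring.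
  by apply: mulr_ge0; [exact: sqr_ge0 | ].
have h3 : (kr + 1) * X <= (kr + 1) ^+ 3.
  rewrite exprS; apply: ler_wpM2l; lra.
have h4 : (kr + 1) * X * K%:R <= (kr + 1) ^+ 3 * K%:R by apply: ler_wpM2r.
lra.
Qed.
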